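(* Let $\phi_T(t)=\frac{\tanh t}{t}$ (the hyperbolic-tangent characteristic function), whose Khintchine pair is $[0,m_T]$ with $m_T(dx)=\frac12\frac{|x|}{1+x^2}\frac{e^{-\pi|x|/4}}{\cosh(\pi|x|/4)}dx$. Its free analogue $\tilde\phi_T$ has Voiculescu transform $$V_{\tilde\phi_T}(it)=it\big[\ln(t/2)-\beta(t/2)-\psi(t/2)\big]=it\big[\ln(t/4)-\psi(t/4+1/2)\big],\qquad t>0.$$ Consequently, $2\psi(2s)-\psi(s)-\psi(s+1/2)=2\ln2$ for all $s>0$.
   Context: $\psi=\Gamma'/\Gamma$ is the digamma function and $\beta(x):=\sum_{k=0}^\infty\frac{(-1)^k}{x+k}=\frac12[\psi(\frac{x+1}{2})-\psi(\frac x2)]$ for $x>0$. For an infinitely divisible characteristic function $\phi$ with Khintchine exponent $\log\phi$ (continuous logarithm, $\log\phi(0)=0$), its free analogue $\tilde\phi$ is the $\boxplus$-infinitely divisible probability measure whose Voiculescu transform satisfies $V_{\tilde\phi}(it)=it^2\int_0^\infty\overline{\log\phi(s)}e^{-ts}ds$, $t>0$; if $\phi$ has Khintchine pair $[0,m]$ with $m$ symmetric, this equals $-it\int_{\mathbb{R}}\frac{1+x^2}{t^2+x^2}m(dx)$. *)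

(* Defs.v *)
From Stdlib Require Import Reals Lra ClassicalEpsilon.
Open Scope R_scope.

(* Digamma function psi = Gamma'/Gamma, via Gauss' limit formula
   psi(x) = lim_{n->oo} ( ln n - sum_{k=0}^{n} 1/(x+k) ),  x > 0.
   (Stdlib has no Gamma function.) *)
Definition digamma_seq (x : R) (n : nat) : R :=
  ln (INR n) - sum_f_R0 (fun k => / (x + INR k)) n.

Definition digamma (x : R) : R :=
  epsilon (inhabits 0) (fun y => Un_cv (digamma_seq x) y).

Definition beta_fun (x : R) : R :=
  epsilon (inhabits 0)
    (fun y => infinite_sum (fun k => (-1) ^ k / (x + INR k)) y).

Definition improper_int_0_infty (f : R -> R) (l : R) : Prop :=
  (forall b, 0 <= b -> inhabited (Riemann_integrable f 0 b)) /\
  (forall eps, eps > 0 -> exists B, forall b (pr : Riemann_integrable f 0 b),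
      B <= b -> Rabs (RiemannInt pr - l) < eps).

(* Hyperbolic-tangent characteristic function phi_T(t) = tanh t / t,
   with phi_T(0) = 1; it is real and positive, so its continuous
   logarithm is ln (phi_T t). *)
Definition phiT (t : R) : R := if Req_EM_T t 0 then 1 else tanh t / t.
Definition logphiT (t : R) : R := ln (phiT t).

(* Free analogue: V(it) = i t^2 int_0^oo conj(log phi(s)) e^{-ts} ds.
   For a real-valued log phi this is purely imaginary: V(it) = i * v with
   v = t^2 * int_0^oo log phi(s) e^{-ts} ds.
   [free_V_im logphi t v] says the integral converges and V(it) = i v. *)
Definition free_V_im (logphi : R -> R) (t v : R) : Prop :=
  exists L, improper_int_0_infty (fun s => logphi s * exp (- (t * s))) L
            /\ v = t ^ 2 * L.

(* Main.v *)
Require Import Defs.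
From Stdlib Require Import Reals Lra Lia ClassicalEpsilon.
From Coquelicot Require Import Coquelicot.
Open Scope R_scope.


Lemma ln_le_m1 y : 0 < y -> ln y <= y - 1.
Proof. intros H. generalize (exp_ineq1_le (ln y)). rewrite exp_ln; lra. Qed.

Lemma dseq_succ x n : digamma_seq x (S n) =
  digamma_seq x n + (ln (INR (S n)) - ln (INR n)) - / (x + INR (S n)).
Proof. unfold digamma_seq. cbn [sum_f_R0]. ring. Qed.

Lemma ln_ratio_bounds n : (1 <= n)%nat ->
  / INR (S n) <= ln (INR (S n)) - ln (INR n) <= / INR n.
Proof.
  intros Hn. assert (H1 : 1 <= INR n) by (apply (le_INR 1); auto).
  rewrite S_INR. split.
  - assert (E: ln (INR n) - ln (INR n + 1) = ln (INR n / (INR n + 1))).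
    { unfold Rdiv. rewrite ln_mult, ln_Rinv; try lra. apply Rinv_0_lt_compat; lra. }
    generalize (ln_le_m1 (INR n / (INR n + 1))). intro L.
    assert (0 < INR n / (INR n + 1)) by (apply Rdiv_lt_0_compat; lra).
    assert (INR n / (INR n + 1) - 1 = - / (INR n + 1)) by (field; lra). lra.
  - assert (E: ln (INR n + 1) - ln (INR n) = ln ((INR n + 1) / INR n)).
    { unfold Rdiv. rewrite ln_mult, ln_Rinv; try lra. apply Rinv_0_lt_compat; lra. }
    generalize (ln_le_m1 ((INR n + 1) / INR n)). intro L.
    assert (0 < (INR n + 1) / INR n) by (apply Rdiv_lt_0_compat; lra).
    assert ((INR n + 1) / INR n - 1 = / INR n) by (field; lra). lra.
Qed.

Lemma digamma_cv_ex x : 0 < x -> exists l, Un_cv (digamma_seq x) l.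
Proof.
  intros Hx.
  set (u := fun n => digamma_seq x (n + 1)).
  assert (Hstep : forall n, 0 <= u (S n) - u n <= (x+1) * (/ INR (S n) - / INR (S (S n)))).
  { intro n. unfold u. replace (S n + 1)%nat with (S (n + 1)) by lia.
    rewrite dseq_succ. destruct (ln_ratio_bounds (n+1)) as [L1 L2]; [lia|].
    replace (n+1)%nat with (S n) in * by lia.
    assert (0 < INR (S n)) by (apply lt_0_INR; lia).
    assert (E: INR (S (S n)) = INR (S n) + 1) by (rewrite S_INR; ring).
    rewrite E in *.
    assert (/ (x + (INR (S n) + 1)) <= / (INR (S n) + 1)) by (apply Rinv_le_contravar; lra).
    split; [lra|].
    assert (/ INR (S n) - / (x + (INR (S n) + 1)) = (x+1) / (INR (S n) * (x + (INR (S n) + 1)))) by (field; lra).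
    assert ((x+1) * (/ INR (S n) - / (INR (S n) + 1)) = (x+1) / (INR (S n) * (INR (S n) + 1))) by (field; lra).
    assert ((x+1) / (INR (S n) * (x + (INR (S n) + 1))) <= (x+1) / (INR (S n) * (INR (S n) + 1))).
    { unfold Rdiv. apply Rmult_le_compat_l; [lra|]. apply Rinv_le_contravar.
      apply Rmult_lt_0_compat; lra. apply Rmult_le_compat_l; lra. }
    lra. }
  assert (Hub : forall n, u n + (x+1) * / INR (S n) <= u O + (x+1)).
  { induction n. simpl. rewrite Rinv_1. lra.
    specialize (Hstep n). lra. }
  destruct (growing_cv u) as [l Hl].
  - intro n. specialize (Hstep n). lra.
  - exists (u O + (x+1)). intros y [n ->]. specialize (Hub n).
    assert (0 < / INR (S n)) by (apply Rinv_0_lt_compat, lt_0_INR; lia).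
    assert (0 <= (x+1) * / INR (S n)) by (apply Rmult_le_pos; lra). lra.
  - exists l. apply (CV_shift _ 1). exact Hl.
Qed.

Lemma digamma_spec x : 0 < x -> Un_cv (digamma_seq x) (digamma x).
Proof.
  intros Hx. unfold digamma. apply epsilon_spec. now apply digamma_cv_ex.
Qed.


Lemma cv_bound (u : nat -> R) c K : 0 <= K ->
  (forall n, (1 <= n)%nat -> Rabs (u n - c) <= K / INR n) -> Un_cv u c.
Proof.
  intros HK H eps Heps.
  destruct (INR_unbounded (K / eps)) as [N HN].
  exists (S N). intros n Hn. unfold R_dist.
  assert (HNn : INR (S N) <= INR n) by (apply le_INR; lia).
  rewrite S_INR in HNn.
  assert (0 <= INR N) by apply pos_INR.
  eapply Rle_lt_trans. apply H. lia.
  apply (Rmult_lt_reg_r (INR n)). lra.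
  unfold Rdiv. rewrite Rmult_assoc, Rinv_l by lra.
  assert (K <= eps * (K/eps) ) by (right; field; lra).
  assert (eps * (K/eps) < eps * INR n) by (apply Rmult_lt_compat_l; lra). lra.
Qed.

Lemma cv_odd (u : nat -> R) l : Un_cv u l -> Un_cv (fun n => u (2*n+1)%nat) l.
Proof.
  intros H eps Heps. destruct (H eps Heps) as [N HN]. exists N.
  intros n Hn. apply HN. lia.
Qed.

Lemma cv_const c : Un_cv (fun _ => c) c.
Proof. intros eps Heps. exists O. intros. unfold R_dist. rewrite Rminus_diag, Rabs_R0. lra. Qed.

Lemma cv_scal a (u : nat -> R) l : Un_cv u l -> Un_cv (fun n => a * u n) (a * l).
Proof. intros H. apply CV_mult. apply cv_const. exact H. Qed.

Lemma sum_dup s n : 0 < s ->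
  sum_f_R0 (fun k => / (2 * s + INR k)) (2 * n + 1) =
  / 2 * (sum_f_R0 (fun j => / (s + INR j)) n + sum_f_R0 (fun j => / (s + 1/2 + INR j)) n).
Proof.
  intros Hs. induction n.
  - simpl. field. lra.
  - replace (2 * S n + 1)%nat with (S (S (2 * n + 1))) by lia.
    cbn [sum_f_R0]. rewrite IHn.
    replace (INR (S (S (2 * n + 1)))) with (2 * INR (S n) + 1)
      by (rewrite !S_INR, plus_INR, mult_INR; simpl; ring).
    replace (INR (S (2 * n + 1))) with (2 * INR (S n))
      by (rewrite !S_INR, plus_INR, mult_INR; simpl; ring).
    assert (0 <= INR (S n)) by apply pos_INR.
    field. lra.
Qed.

Lemma digamma_dup s : 0 < s ->
  2 * digamma (2 * s) - digamma s - digamma (s + 1 / 2) = 2 * ln 2.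
Proof.
  intros Hs.
  assert (C1 := cv_scal 2 _ _ (cv_odd _ _ (digamma_spec (2*s) ltac:(lra)))).
  assert (C2 := CV_minus _ _ _ _ (CV_minus _ _ _ _ C1 (digamma_spec s Hs))
                  (digamma_spec (s + 1/2) ltac:(lra))).
  eapply UL_sequence. exact C2.
  apply (cv_bound _ _ 1). lra.
  intros n Hn. cbv beta. unfold digamma_seq. rewrite sum_dup by lra.
  assert (H1 : 1 <= INR n) by (apply (le_INR 1); auto).
  replace (INR (2 * n + 1)) with (2 * INR n + 1) by (rewrite plus_INR, mult_INR; simpl; ring).
  assert (E : ln (2 * INR n + 1) = ln 2 + ln (INR n) + ln ((2 * INR n + 1) / (2 * INR n))).
  { rewrite <- ln_mult, <- ln_mult; try lra.
    f_equal. field. lra. all: try lra. all: try (apply Rdiv_lt_0_compat; lra). }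
  rewrite E.
  assert (0 < (2 * INR n + 1) / (2 * INR n)) by (apply Rdiv_lt_0_compat; lra).
  assert (L1 := ln_le_m1 _ H).
  assert (L2 : 0 <= ln ((2 * INR n + 1) / (2 * INR n))).
  { rewrite <- ln_1. destruct (Req_dec ((2 * INR n + 1) / (2 * INR n)) 1) as [e|e].
    rewrite e; lra. left. apply ln_increasing. lra.
    apply (Rmult_lt_reg_r (2 * INR n)). lra. unfold Rdiv. rewrite Rmult_assoc, Rinv_l; lra. }
  assert (E2 : (2 * INR n + 1) / (2 * INR n) - 1 = / 2 * (1 / INR n)) by (field; lra).
  rewrite Rabs_right.
  - lra.
  - lra.
Qed.


Lemma sum_alt y n : 0 < y ->
  sum_f_R0 (fun k => (-1) ^ k / (y + INR k)) (2 * n + 1) =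
  / 2 * (digamma_seq ((y + 1) / 2) n - digamma_seq (y / 2) n).
Proof.
  intros Hy. unfold digamma_seq.
  induction n.
  - simpl. field. lra.
  - replace (2 * S n + 1)%nat with (S (S (2 * n + 1))) by lia.
    cbn [sum_f_R0]. rewrite IHn.
    replace (INR (S (S (2 * n + 1)))) with (2 * INR (S n) + 1)
      by (rewrite !S_INR, plus_INR, mult_INR; simpl; ring).
    replace (INR (S (2 * n + 1))) with (2 * INR (S n))
      by (rewrite !S_INR, plus_INR, mult_INR; simpl; ring).
    replace (S (S (2 * n + 1))) with (S (2 * S n)) by lia.
    replace (S (2 * n + 1)) with (2 * S n)%nat by lia.
    rewrite pow_1_odd, pow_1_even.
    assert (0 <= INR (S n)) by apply pos_INR.
    field. lra.
Qed.

Lemma beta_sum y : 0 < y ->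
  infinite_sum (fun k => (-1) ^ k / (y + INR k))
    (/ 2 * (digamma ((y + 1) / 2) - digamma (y / 2))).
Proof.
  intros Hy eps Heps.
  assert (C := cv_scal (/2) _ _ (CV_minus _ _ _ _ (digamma_spec ((y+1)/2) ltac:(lra))
                                 (digamma_spec (y/2) ltac:(lra)))).
  destruct (C (eps/2) ltac:(lra)) as [N1 HN1].
  destruct (INR_unbounded (2 / eps)) as [N2 HN2].
  exists (2 * (N1 + N2) + 1)%nat. intros m Hm.
  destruct (Nat.Even_or_Odd m) as [[n ->]|[n ->]].
  - destruct n as [|n]; [lia|].
    replace (2 * S n)%nat with (S (2 * n + 1)) by lia.
    cbn [sum_f_R0]. rewrite sum_alt by lra.
    specialize (HN1 n ltac:(lia)). unfold R_dist in *.
    replace ((-1) ^ S (2 * n + 1)) with ((-1) ^ (2 * S n)) by (f_equal; lia).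
    rewrite pow_1_even.
    assert (HI : INR N2 <= INR (S (2 * n + 1))) by (apply le_INR; lia).
    assert (0 < INR (S (2*n+1))) by (apply lt_0_INR; lia).
    assert (0 < 1 / (y + INR (S (2 * n + 1))) < eps / 2).
    { split. apply Rdiv_lt_0_compat; lra.
      apply (Rmult_lt_reg_r (y + INR (S (2 * n + 1)))). lra.
      unfold Rdiv. rewrite Rmult_assoc, Rinv_l, Rmult_1_r by lra.
      assert (2 / eps * eps = 2) by (field; lra).
      assert (2/eps * eps < INR (S (2 * n + 1)) * eps) by (apply Rmult_lt_compat_r; lra).
      nra. }
    revert HN1 H0. generalize (/ 2 * (digamma_seq ((y + 1) / 2) n - digamma_seq (y / 2) n)).
    intros a HN1 H0. unfold Rabs in *. repeat destruct Rcase_abs; lra.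
  - rewrite sum_alt by lra. eapply Rlt_trans. apply HN1. lia. lra.
Qed.

Lemma beta_val y : 0 < y -> beta_fun y = / 2 * (digamma ((y + 1) / 2) - digamma (y / 2)).
Proof.
  intros Hy. eapply uniqueness_sum; [|apply beta_sum; exact Hy].
  unfold beta_fun. apply epsilon_spec. eexists. apply beta_sum; exact Hy.
Qed.

Lemma form_eq t : 0 < t ->
  ln (t / 2) - beta_fun (t / 2) - digamma (t / 2) = ln (t / 4) - digamma (t / 4 + 1 / 2).
Proof.
  intros Ht. rewrite beta_val by lra.
  replace ((t / 2 + 1) / 2) with (t / 4 + 1 / 2) by field.
  replace (t / 2 / 2) with (t / 4) by field.
  assert (D := digamma_dup (t / 4) ltac:(lra)).
  replace (2 * (t / 4)) with (t / 2) in D by field.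
  replace (t / 2) with (2 * (t / 4)) at 1 by field.
  rewrite ln_mult by lra. lra.
Qed.


Definition kf (s : R) : R := 4 * exp (- (2 * s)) / (1 - exp (- (4 * s))) - / s.

Lemma exp_mul_n s : exp (2 * s) = exp s ^ 2 /\ exp (4 * s) = exp s ^ 4.
Proof.
  assert (E2 : exp (2 * s) = exp s ^ 2).
  { replace (2 * s) with (s + s) by ring. rewrite exp_plus. ring. }
  split; auto. replace (4 * s) with (2 * s + 2 * s) by ring. rewrite exp_plus, E2. ring.
Qed.

Lemma exp_gt1 s : 0 < s -> 1 < exp s.
Proof. intros. rewrite <- exp_0. apply exp_increasing. lra. Qed.

Lemma h_pos_eq s : s <> 0 -> logphiT s = ln ((exp s - exp (-s)) / (exp s + exp (-s)) / s).
Proof.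
  intros Hs. unfold logphiT, phiT. destruct (Req_EM_T s 0); [contradiction|].
  unfold tanh, sinh, cosh. f_equal. field. split; auto.
  generalize (exp_pos s) (exp_pos (-s)); lra.
Qed.

Lemma h_derive s : 0 < s -> is_derive logphiT s (kf s).
Proof.
  intros Hs.
  apply is_derive_ext_loc with (f := fun y => ln ((exp y - exp (-y)) / (exp y + exp (-y)) / y)).
  { apply filter_imp with (P := fun y => 0 < y). intros y Hy. symmetry. apply h_pos_eq. lra.
    apply (open_gt 0 s Hs). }
  assert (X1 := exp_gt1 s Hs).
  destruct (exp_mul_n s) as [E2 E4].
  auto_derive.
  - rewrite exp_Ropp. repeat split.
    + generalize (exp_pos s) (Rinv_0_lt_compat _ (exp_pos s)); lra.
    + lra.
    + assert (0 < / exp s < 1). { split. apply Rinv_0_lt_compat, exp_pos.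
        rewrite <- Rinv_1. apply Rinv_lt_contravar; lra. }
      apply Rmult_lt_0_compat; [|apply Rinv_0_lt_compat; lra].
      apply Rmult_lt_0_compat; [lra|]. apply Rinv_0_lt_compat; lra.
  - unfold kf. rewrite !exp_Ropp, E2, E4. set (X := exp s) in *.
    assert (X * X > 1) by nra.
    assert (X ^ 4 > 1). { replace (X^4) with ((X*X)*(X*X)) by ring. nra. }
    field. repeat split; lra.
Qed.

Lemma kf_Y s : 0 < s -> kf s = 4 * exp (2 * s) / (exp (2 * s) ^ 2 - 1) - / s.
Proof.
  intros Hs. unfold kf. rewrite !exp_Ropp.
  replace (exp (4 * s)) with (exp (2 * s) ^ 2)
    by (replace (4 * s) with (2 * s + 2 * s) by ring; rewrite exp_plus; ring).
  assert (1 < exp (2 * s)) by (apply exp_gt1; lra).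
  set (Y := exp (2 * s)) in *.
  assert (Y^2 > 1) by nra.
  field. repeat split; try lra.
Qed.

Lemma kf_bound s : 0 < s -> Rabs (kf s) <= 2.
Proof.
  intros Hs. rewrite kf_Y by lra.
  assert (HY1 := exp_ineq1_le (2 * s)).
  assert (HZ1 := exp_ineq1_le (- (2 * s))).
  rewrite exp_Ropp in HZ1.
  assert (1 < exp (2 * s)) by (apply exp_gt1; lra).
  set (Y := exp (2 * s)) in *.
  assert (HY2 : Y ^ 2 - 1 > 0) by nra.
  apply Rabs_le. split.
  - destruct (Rle_lt_dec (1/2) s) as [Hs2|Hs2].
    + assert (0 < 4 * Y / (Y ^ 2 - 1)) by (apply Rdiv_lt_0_compat; lra).
      assert (/ s <= 2). { replace 2 with (/ (1/2)) by field. apply Rinv_le_contravar; lra. }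
      lra.
    + set (Z := / Y) in *.
      assert (HZ : 0 < Z < 1). { split. apply Rinv_0_lt_compat; lra.
        unfold Z. rewrite <- Rinv_1. apply Rinv_lt_contravar; lra. }
      assert (EY : Y = / Z) by (unfold Z; rewrite Rinv_inv; auto).
      rewrite EY.
      replace (4 * / Z / ((/ Z) ^ 2 - 1)) with (4 * Z / (1 - Z ^ 2)) by (field; split; nra).
      set (w := 1 - 2 * s) in *.
      assert (Hw : 0 < w <= 1) by (unfold w; lra).
      assert (HZw : Z >= w) by (unfold w; lra).
      assert (Hq : w * Z ^ 2 + 2 * (1 - w) * Z - w >= 0).
      { assert ((Z - w) * (w * (Z + w) + 2 * (1 - w)) >= 0).
        { apply Rle_ge, Rmult_le_pos; nra. }
        assert (0 <= w * ((1 - w) * (1 - w))) by (apply Rmult_le_pos; nra).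
        nra. }
      assert (4 * Z / (1 - Z ^ 2) >= / s - 2).
      { apply Rle_ge. apply (Rmult_le_reg_r (s * (1 - Z^2))). apply Rmult_lt_0_compat; nra.
        replace (4 * Z / (1 - Z ^ 2) * (s * (1 - Z ^ 2))) with (4 * Z * s) by (field; nra).
        replace ((/ s - 2) * (s * (1 - Z ^ 2))) with ((1 - 2 * s) * (1 - Z^2)) by (field; lra).
        replace s with ((1 - w)/2) by (unfold w; field). nra. }
      lra.
  - set (Y0 := 1 + 2 * s) in *.
    assert (Hq : (s + 1) * Y ^ 2 - 4 * s * Y - (s + 1) >= 0).
    { assert ((Y - Y0) * ((s + 1) * (Y + Y0) - 4 * s) >= 0).
      { apply Rle_ge, Rmult_le_pos; unfold Y0 in *; nra. }
      unfold Y0 in *. nra. }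
    assert (4 * Y / (Y ^ 2 - 1) <= 1 + / s).
    { apply (Rmult_le_reg_r (s * (Y^2 - 1))). apply Rmult_lt_0_compat; nra.
      replace (4 * Y / (Y ^ 2 - 1) * (s * (Y ^ 2 - 1))) with (4 * Y * s) by (field; nra).
      replace ((1 + / s) * (s * (Y ^ 2 - 1))) with ((s + 1) * (Y^2 - 1)) by (field; lra).
      nra. }
    lra.
Qed.


Lemma kf_cont s : 0 < s -> continuous kf s.
Proof.
  intros Hs. apply (@ex_derive_continuous R_AbsRing R_NormedModule). unfold kf.
  assert (1 < exp (4 * s)) by (apply exp_gt1; lra).
  assert (/ exp (4*s) < 1). { rewrite <- Rinv_1. apply Rinv_lt_contravar; lra. }
  rewrite <- exp_Ropp in *.
  auto_derive. repeat split; lra.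
Qed.

Lemma h_cont_pos s : 0 < s -> continuous logphiT s.
Proof. intros Hs. apply (@ex_derive_continuous R_AbsRing R_NormedModule). eexists. apply h_derive. exact Hs. Qed.

Definition Tf (y : R) := (exp y - exp (- y)) / (exp y + exp (- y)).

Lemma Tf_derive0 : derivable_pt_lim Tf 0 1.
Proof.
  apply is_derive_Reals. unfold Tf. auto_derive.
  - rewrite Ropp_0, exp_0. lra.
  - rewrite Ropp_0, exp_0. field.
Qed.

Lemma phiT_cont0 : continuous phiT 0.
Proof.
  apply continuity_pt_filterlim.
  intros eps Heps. destruct (Tf_derive0 eps Heps) as [del Hdel].
  exists del. split. apply cond_pos. intros x [[_ Hx0] Hx].
  simpl in *. unfold R_dist in *. rewrite Rminus_0_r in Hx.
  specialize (Hdel x (not_eq_sym Hx0) Hx).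
  unfold phiT. destruct (Req_EM_T x 0); [congruence|]. destruct (Req_EM_T 0 0); [|congruence].
  rewrite Rplus_0_l in Hdel.
  replace (Tf 0) with 0 in Hdel by (unfold Tf; rewrite Ropp_0, exp_0; field).
  rewrite Rminus_0_r in Hdel.
  replace (tanh x) with (Tf x). exact Hdel.
  unfold Tf, tanh, sinh, cosh. field. generalize (exp_pos x) (exp_pos (-x)); lra.
Qed.

Lemma h_cont0 : continuous logphiT 0.
Proof.
  unfold logphiT. apply (continuous_comp phiT ln). apply phiT_cont0.
  apply (@ex_derive_continuous R_AbsRing R_NormedModule). unfold phiT. destruct (Req_EM_T 0 0); [|congruence].
  auto_derive. lra.
Qed.

Lemma h_cont s : 0 <= s -> continuous logphiT s.
Proof. intros [H|<-]. now apply h_cont_pos. apply h_cont0. Qed.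

Lemma E_cont p s : continuous (fun s => exp (- (p * s))) s.
Proof. apply (@ex_derive_continuous R_AbsRing R_NormedModule). auto_derive. auto. Qed.

Lemma g_cont p s : 0 <= s -> continuous (fun s => logphiT s * exp (- (p * s))) s.
Proof.
  intros Hs. apply (continuous_mult logphiT (fun s => exp (- (p * s)))).
  now apply h_cont. apply E_cont.
Qed.

Lemma g_int p a b : 0 <= a -> 0 <= b -> ex_RInt (fun s => logphiT s * exp (- (p * s))) a b.
Proof.
  intros Ha Hb. apply (@ex_RInt_continuous R_CompleteNormedModule). intros z Hz. apply g_cont.
  destruct Hz as [Hz _]. unfold Rmin in Hz. destruct Rle_dec; lra.
Qed.

Lemma kE_int p a b : 0 < a -> 0 < b -> ex_RInt (fun s => kf s * exp (- (p * s))) a b.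
Proof.
  intros Ha Hb. apply (@ex_RInt_continuous R_CompleteNormedModule). intros z Hz.
  apply (continuous_mult kf (fun s => exp (- (p * s)))).
  apply kf_cont. destruct Hz as [Hz _]. unfold Rmin in Hz. destruct Rle_dec; lra.
  apply E_cont.
Qed.


Lemma cpt f x : continuous f x -> continuity_pt f x.
Proof. intros H. apply continuity_pt_filterlim. exact H. Qed.
Lemma ptc f x : continuity_pt f x -> continuous f x.
Proof. intros H. apply continuity_pt_filterlim. exact H. Qed.

Lemma RInt_plusR f g a b : ex_RInt f a b -> ex_RInt g a b ->
  RInt (fun x => f x + g x) a b = RInt f a b + RInt g a b.
Proof. intros H1 H2. exact (RInt_plus f g a b H1 H2). Qed.
Lemma RInt_minusR f g a b : ex_RInt f a b -> ex_RInt g a b ->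
  RInt (fun x => f x - g x) a b = RInt f a b - RInt g a b.
Proof. intros H1 H2. exact (RInt_minus f g a b H1 H2). Qed.
Lemma RInt_scalR f c a b : ex_RInt f a b ->
  RInt (fun x => c * f x) a b = c * RInt f a b.
Proof. intros H1. exact (RInt_scal f a b c H1). Qed.
Lemma ex_RInt_plusR f g a b : ex_RInt f a b -> ex_RInt g a b -> ex_RInt (fun x => f x + g x) a b.
Proof. intros H1 H2. exact (ex_RInt_plus f g a b H1 H2). Qed.
Lemma ex_RInt_minusR f g a b : ex_RInt f a b -> ex_RInt g a b -> ex_RInt (fun x => f x - g x) a b.
Proof. intros H1 H2. exact (ex_RInt_minus f g a b H1 H2). Qed.
Lemma ex_RInt_scalR f c a b : ex_RInt f a b -> ex_RInt (fun x => c * f x) a b.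
Proof. intros H1. exact (ex_RInt_scal f a b c H1). Qed.
Lemma RInt_ChaslesR f a b c : ex_RInt f a b -> ex_RInt f b c -> RInt f a b + RInt f b c = RInt f a c.
Proof. intros H1 H2. exact (RInt_Chasles f a b c H1 H2). Qed.

Lemma FTC_R (f df : R -> R) a b : a <= b ->
  (forall x, a <= x <= b -> is_derive f x (df x)) ->
  (forall x, a <= x <= b -> continuous df x) ->
  RInt df a b = f b - f a.
Proof.
  intros Hab Hd Hc. apply is_RInt_unique.
  apply (is_RInt_derive f df a b).
  - intros x Hx. apply Hd. rewrite Rmin_left, Rmax_right in Hx; lra.
  - intros x Hx. apply Hc. rewrite Rmin_left, Rmax_right in Hx; lra.
Qed.

Lemma E_derive p s : is_derive (fun s => exp (- (p * s))) s (- p * exp (- (p * s))).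
Proof. auto_derive. auto. ring. Qed.

Lemma IBP p e b : 0 < e <= b ->
  RInt (fun s => kf s * exp (- (p * s))) e b =
  p * RInt (fun s => logphiT s * exp (- (p * s))) e b
  + logphiT b * exp (- (p * b)) - logphiT e * exp (- (p * e)).
Proof.
  intros He.
  assert (Hd : forall x, e <= x <= b -> is_derive (fun s => logphiT s * exp (- (p * s))) x
     (kf x * exp (- (p * x)) - p * (logphiT x * exp (- (p * x))))).
  { intros x Hx.
    assert (D := is_derive_mult logphiT (fun s => exp (- (p * s))) x _ _ (h_derive x ltac:(lra)) (E_derive p x) Rmult_comm).
    replace (kf x * exp (- (p * x)) - p * (logphiT x * exp (- (p * x))))
      with (plus (mult (kf x) (exp (- (p * x)))) (mult (logphiT x) (- p * exp (- (p * x))))).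
    exact D. unfold plus, mult; simpl. ring. }
  assert (Hc : forall x, e <= x <= b -> continuous
     (fun s => kf s * exp (- (p * s)) - p * (logphiT s * exp (- (p * s)))) x).
  { intros x Hx. apply ptc. apply continuity_pt_minus.
    + apply continuity_pt_mult. apply cpt, kf_cont; lra. apply cpt, E_cont.
    + apply continuity_pt_mult. apply continuity_pt_const. intros u v; auto.
      apply cpt, g_cont. lra. }
  assert (F := FTC_R (fun s => logphiT s * exp (- (p * s)))
     (fun s => kf s * exp (- (p * s)) - p * (logphiT s * exp (- (p * s)))) e b ltac:(lra) Hd Hc).
  rewrite RInt_minusR, RInt_scalR in F.
  - cbv beta in F. lra.
  - apply g_int; lra.
  - apply kE_int; lra.
  - apply ex_RInt_scalR, g_int; lra.
Qed.


Lemma Eint_ex c a b : ex_RInt (fun s => exp (- (c * s))) a b.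
Proof. apply (@ex_RInt_continuous R_CompleteNormedModule). intros; apply E_cont. Qed.

Lemma Eint c a b : 0 < c -> a <= b ->
  RInt (fun s => exp (- (c * s))) a b = (exp (- (c * a)) - exp (- (c * b))) / c.
Proof.
  intros Hc Hab.
  rewrite (FTC_R (fun s => - exp (- (c * s)) / c)).
  - match goal with |- ?x = ?y => change (@eq R x y) end. field. lra.
  - exact Hab.
  - intros x _. auto_derive. auto. field. lra.
  - intros; apply E_cont.
Qed.

Lemma exp_nat_pow a j : exp (a * INR j) = exp a ^ j.
Proof.
  induction j. simpl. rewrite Rmult_0_r, exp_0. ring.
  rewrite S_INR, Rmult_plus_distr_l, Rmult_1_r, exp_plus, IHj. simpl. ring.
Qed.

Lemma geom_identity t n s : 0 < s ->
  kf s * (exp (- (t * s)) - exp (- ((t + 4 * INR (S n)) * s))) =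
  4 * sum_f_R0 (fun j => exp (- ((t + 2 + 4 * INR j) * s))) n
  - (exp (- (t * s)) - exp (- ((t + 4 * INR (S n)) * s))) / s.
Proof.
  intros Hs. unfold kf.
  set (r := exp (- (4 * s))).
  assert (Hr : forall j, exp (- ((t + 2 + 4 * INR j) * s)) = exp (- (t * s)) * exp (- (2 * s)) * r ^ j).
  { intro j. unfold r. rewrite <- exp_nat_pow, <- !exp_plus. f_equal. ring. }
  assert (Hq : exp (- ((t + 4 * INR (S n)) * s)) = exp (- (t * s)) * r ^ S n).
  { unfold r. rewrite <- exp_nat_pow, <- !exp_plus. f_equal. ring. }
  assert (Hr1 : r < 1). { unfold r. rewrite <- exp_0. apply exp_increasing. lra. }
  rewrite (sum_eq _ (fun j => r ^ j * (exp (- (t * s)) * exp (- (2 * s))))) by (intros; rewrite Hr; ring).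
  rewrite <- scal_sum. rewrite tech3 by lra. rewrite Hq.
  field. split; lra.
Qed.

Lemma RInt_sumR (F : nat -> R -> R) a b n :
  (forall j, ex_RInt (F j) a b) ->
  RInt (fun s => sum_f_R0 (fun j => F j s) n) a b = sum_f_R0 (fun j => RInt (F j) a b) n.
Proof.
  intros H. induction n.
  - simpl. apply RInt_ext. intros; reflexivity.
  - cbn [sum_f_R0]. rewrite <- IHn. apply (RInt_plusR (fun s => sum_f_R0 (fun j => F j s) n) (F (S n))).
    + clear IHn. induction n. simpl. apply (ex_RInt_ext (F 0%nat)). intros; reflexivity. apply H.
      cbn [sum_f_R0]. apply (ex_RInt_plusR (fun s => sum_f_R0 (fun j => F j s) n) (F (S n))); auto.
    + apply H.
Qed.


Ltac toR := match goal with |- ?x = ?y => change (@eq R x y) end.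

Definition fw (w : R) := exp (- w) / w.

Lemma Rmin_posz a b : 0 < a -> 0 < b -> forall z, Rmin a b <= z -> 0 < z.
Proof. intros Ha Hb z Hz. unfold Rmin in Hz. destruct Rle_dec; lra. Qed.

Lemma fw_int a b : 0 < a -> 0 < b -> ex_RInt fw a b.
Proof.
  intros Ha Hb. apply (@ex_RInt_continuous R_CompleteNormedModule). intros z [Hz _].
  assert (0 < z) by exact (Rmin_posz a b Ha Hb z Hz).
  apply (@ex_derive_continuous R_AbsRing R_NormedModule). unfold fw. auto_derive. lra.
Qed.

Lemma Es_int p a b : 0 < a -> 0 < b -> ex_RInt (fun s => exp (- (p * s)) / s) a b.
Proof.
  intros Ha Hb. apply (@ex_RInt_continuous R_CompleteNormedModule). intros z [Hz _].
  assert (0 < z) by exact (Rmin_posz a b Ha Hb z Hz).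
  apply (@ex_derive_continuous R_AbsRing R_NormedModule). auto_derive. lra.
Qed.

Lemma Es_sub p e b : 0 < p -> 0 < e -> 0 < b ->
  RInt (fun s => exp (- (p * s)) / s) e b = RInt fw (p * e) (p * b).
Proof.
  intros Hp He Hb.
  assert (Hex : ex_RInt fw (p * e + 0) (p * b + 0)).
  { rewrite !Rplus_0_r. apply fw_int; apply Rmult_lt_0_compat; lra. }
  assert (C := RInt_comp_lin fw p 0 e b Hex). rewrite !Rplus_0_r in C.
  rewrite <- C. apply RInt_ext. intros x Hx.
  assert (0 < x) by (destruct Hx as [Hx _]; eapply Rmin_posz; [exact He|exact Hb|lra]).
  unfold fw, scal; simpl; unfold mult; simpl. rewrite Rplus_0_r. field. lra.
Qed.

Lemma Frullani_fin p q e b : 0 < p -> 0 < q -> 0 < e -> 0 < b ->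
  RInt (fun s => (exp (- (p * s)) - exp (- (q * s))) / s) e b =
  RInt fw (p * e) (q * e) - RInt fw (p * b) (q * b).
Proof.
  intros Hp Hq He Hb.
  rewrite (RInt_ext _ (fun s => exp (- (p * s)) / s - exp (- (q * s)) / s))
    by (intros; toR; unfold Rdiv; ring).
  rewrite RInt_minusR by (apply Es_int; lra).
  rewrite !Es_sub by lra.
  assert (P : forall u v, 0 < u -> 0 < v -> ex_RInt fw (u * e) (v * b)) by
    (intros; apply fw_int; apply Rmult_lt_0_compat; lra).
  assert (P2 : forall u v, 0 < u -> 0 < v -> ex_RInt fw (u * e) (v * e)) by
    (intros; apply fw_int; apply Rmult_lt_0_compat; lra).
  assert (P3 : forall u v, 0 < u -> 0 < v -> ex_RInt fw (u * b) (v * b)) by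
    (intros; apply fw_int; apply Rmult_lt_0_compat; lra).
  rewrite <- (RInt_ChaslesR fw (p * e) (q * e) (p * b)) by auto.
  rewrite <- (RInt_ChaslesR fw (q * e) (p * b) (q * b)) by auto.
  toR; ring.
Qed.

Lemma inv_int a b : 0 < a -> a <= b -> RInt (fun w => / w) a b = ln b - ln a.
Proof.
  intros Ha Hab. rewrite (FTC_R ln). reflexivity. auto.
  - intros x Hx. auto_derive. lra. field. lra.
  - intros x Hx. apply (@ex_derive_continuous R_AbsRing R_NormedModule). auto_derive. lra.
Qed.

Lemma fw_small p q e : 0 < p < q -> 0 < e ->
  exp (- (q * e)) * (ln q - ln p) <= RInt fw (p * e) (q * e) <= ln q - ln p.
Proof.
  intros Hpq He.
  assert (Hpe : 0 < p * e) by (apply Rmult_lt_0_compat; lra).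
  assert (Hle : p * e <= q * e) by (apply Rmult_le_compat_r; lra).
  assert (Hln : ln (q * e) - ln (p * e) = ln q - ln p) by (rewrite !ln_mult; lra).
  assert (Iinv : ex_RInt (fun w => / w) (p * e) (q * e)).
  { apply (@ex_RInt_continuous R_CompleteNormedModule). intros z [Hz _].
    assert (0 < z) by (unfold Rmin in Hz; destruct Rle_dec; lra).
    apply (@ex_derive_continuous R_AbsRing R_NormedModule). auto_derive. lra. }
  split.
  - rewrite <- Hln, <- inv_int by lra. rewrite <- RInt_scalR by exact Iinv.
    apply RInt_le; auto.
    + apply ex_RInt_scalR; auto.
    + apply fw_int; lra.
    + intros x Hx. unfold fw. unfold Rdiv. apply Rmult_le_compat_r.
      left; apply Rinv_0_lt_compat; lra.
      left. apply exp_increasing. lra.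
  - rewrite <- Hln, <- inv_int by lra.
    apply RInt_le; auto.
    + apply fw_int; lra.
    + intros x Hx. unfold fw. unfold Rdiv. rewrite <- (Rmult_1_l (/ x)) at 2.
      apply Rmult_le_compat_r. left; apply Rinv_0_lt_compat; lra.
      rewrite <- exp_0. left. apply exp_increasing. lra.
Qed.

Lemma fw_large p q b : 0 < p < q -> 0 < b ->
  0 <= RInt fw (p * b) (q * b) <= (q - p) / p * exp (- (p * b)).
Proof.
  intros Hpq Hb.
  assert (Hpb : 0 < p * b) by (apply Rmult_lt_0_compat; lra).
  assert (Hle : p * b <= q * b) by (apply Rmult_le_compat_r; lra).
  split.
  - apply RInt_ge_0; auto. apply fw_int; lra.
    intros x Hx. unfold fw. apply Rlt_le, Rdiv_lt_0_compat. apply exp_pos. lra.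
  - assert (Hc : RInt (fun _ : R => exp (- (p*b)) / (p*b)) (p*b) (q*b) = (q*b - p*b) * (exp (- (p * b)) / (p * b))).
    { rewrite RInt_const. reflexivity. }
    replace ((q - p) / p * exp (- (p * b))) with ((q*b - p*b) * (exp (- (p * b)) / (p * b)))
      by (field; lra).
    rewrite <- Hc.
    apply RInt_le; auto. apply fw_int; lra. apply ex_RInt_const.
    intros x Hx. unfold fw. unfold Rdiv. apply Rmult_le_compat.
    left; apply exp_pos. left; apply Rinv_0_lt_compat; lra.
    left; apply exp_increasing; lra.
    apply Rinv_le_contravar; lra.
Qed.


Definition em (m : nat) : R := / (INR m + 2).

Lemma em_pos m : 0 < em m <= 1/2.
Proof.
  unfold em. assert (0 <= INR m) by apply pos_INR. split.
  apply Rinv_0_lt_compat; lra.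
  replace (1/2) with (/ 2) by field. apply Rinv_le_contravar; lra.
Qed.

Lemma em_small d : 0 < d -> exists N, forall m, (m >= N)%nat -> em m < d.
Proof.
  intros Hd. destruct (INR_unbounded (/ d)) as [N HN]. exists N. intros m Hm.
  unfold em. assert (INR N <= INR m) by (apply le_INR; lia).
  assert (0 < / d) by (apply Rinv_0_lt_compat; lra).
  rewrite <- (Rinv_inv d). apply Rinv_lt_contravar. apply Rmult_lt_0_compat; lra. lra.
Qed.

Lemma h0 : logphiT 0 = 0.
Proof. unfold logphiT, phiT. destruct (Req_EM_T 0 0); [apply ln_1|congruence]. Qed.

Definition gp (p : R) := fun s => logphiT s * exp (- (p * s)).
Definition kE (p : R) := fun s => kf s * exp (- (p * s)).

Lemma gp_small p : exists d, 0 < d /\ forall s, 0 <= s < d -> Rabs (gp p s) <= 1.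
Proof.
  assert (C := cpt _ _ (g_cont p 0 (Rle_refl 0))).
  destruct (C 1 ltac:(lra)) as [d [Hd Hx]]. exists d. split; auto.
  intros s Hs. destruct (Req_dec s 0) as [->|Hs0].
  - unfold gp. rewrite h0. rewrite Rmult_0_l, Rabs_R0. lra.
  - assert (Hc := Hx s). simpl in Hc. unfold R_dist in Hc.
    rewrite h0, Rmult_0_l, Rminus_0_r, Rminus_0_r in Hc. left. apply Hc.
    split. split. exact I. auto. rewrite Rabs_right; lra.
Qed.

Lemma gp_int_cv p : Un_cv (fun m => RInt (gp p) 0 (em m)) 0.
Proof.
  destruct (gp_small p) as [d [Hd Hs]].
  intros eps Heps. destruct (em_small (Rmin d eps) ltac:(apply Rmin_pos; lra)) as [N HN].
  exists N. intros m Hm. unfold R_dist. rewrite Rminus_0_r.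
  specialize (HN m Hm). assert (Hm1 := em_pos m).
  assert (Rmin d eps <= d) by apply Rmin_l. assert (Rmin d eps <= eps) by apply Rmin_r.
  eapply Rle_lt_trans. apply abs_RInt_le_const with (M := 1). lra.
  apply g_int; lra. intros s Hs'. apply Hs. lra. lra.
Qed.

Lemma gp_pt_cv p : Un_cv (fun m => gp p (em m)) 0.
Proof.
  replace 0 with (gp p 0) by (unfold gp; rewrite h0; ring).
  apply continuity_seq. apply cpt, g_cont; lra.
  apply (cv_bound _ _ 1). lra. intros n Hn. rewrite Rminus_0_r.
  assert (H1 := em_pos n). rewrite Rabs_right by lra. unfold em.
  assert (1 <= INR n) by (apply (le_INR 1); auto).
  unfold Rdiv. rewrite Rmult_1_l. apply Rinv_le_contravar; lra.
Qed.

Definition A (p b : R) := p * RInt (gp p) 0 b + logphiT b * exp (- (p * b)).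

Lemma A_lim p b : 1 <= b -> Un_cv (fun m => RInt (kE p) (em m) b) (A p b).
Proof.
  intros Hb.
  assert (E : forall m, RInt (kE p) (em m) b =
     p * (RInt (gp p) 0 b - RInt (gp p) 0 (em m)) + logphiT b * exp (- (p * b)) - gp p (em m)).
  { intro m. assert (H1 := em_pos m). unfold kE. rewrite IBP by lra.
    rewrite <- (RInt_ChaslesR (gp p) 0 (em m) b) by (apply g_int; lra).
    unfold gp. toR. ring. }
  intros eps Heps.
  assert (C := CV_minus _ _ _ _ (CV_plus _ _ _ _ (cv_scal p _ _ (CV_minus _ _ _ _ (cv_const (RInt (gp p) 0 b)) (gp_int_cv p)))
           (cv_const (logphiT b * exp (- (p * b))))) (gp_pt_cv p)).
  destruct (C eps Heps) as [N HN]. exists N. intros m Hm. rewrite E.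
  specialize (HN m Hm). unfold A. replace (p * RInt (gp p) 0 b + logphiT b * exp (- (p * b)))
   with (p * (RInt (gp p) 0 b - 0) + logphiT b * exp (- (p * b)) - 0) by ring. exact HN.
Qed.


Lemma em_cv : Un_cv em 0.
Proof.
  apply (cv_bound _ _ 1). lra. intros n Hn. rewrite Rminus_0_r.
  assert (H1 := em_pos n). rewrite Rabs_right by lra. unfold em.
  assert (1 <= INR n) by (apply (le_INR 1); auto).
  unfold Rdiv. rewrite Rmult_1_l. apply Rinv_le_contravar; lra.
Qed.

Lemma cv_le_abs (u : nat -> R) l K : Un_cv u l -> (forall n, Rabs (u n) <= K) -> Rabs l <= K.
Proof.
  intros Hu HK. destruct (Rle_lt_dec (Rabs l) K) as [H|H]; auto.
  destruct (Hu (Rabs l - K) ltac:(lra)) as [N HN]. specialize (HN N (le_n _)).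
  specialize (HK N). unfold R_dist in HN.
  assert (Rabs l <= Rabs (u N) + Rabs (u N - l)).
  { replace l with (u N - (u N - l)) at 1 by ring. apply Rabs_triang_inv2 || idtac.
    eapply Rle_trans. apply Rabs_triang. rewrite Rabs_Ropp. lra. }
  lra.
Qed.

Lemma cv_squeeze (lo u hi : nat -> R) l : Un_cv lo l -> Un_cv hi l ->
  (forall n, lo n <= u n <= hi n) -> Un_cv u l.
Proof.
  intros Hl Hh Hu eps Heps. destruct (Hl eps Heps) as [N1 H1]. destruct (Hh eps Heps) as [N2 H2].
  exists (N1 + N2)%nat. intros n Hn. specialize (H1 n ltac:(lia)). specialize (H2 n ltac:(lia)).
  specialize (Hu n). unfold R_dist in *. unfold Rabs in *. repeat destruct Rcase_abs; lra.
Qed.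

Lemma cv_sum (F : nat -> nat -> R) (l : nat -> R) n :
  (forall j, Un_cv (F j) (l j)) -> Un_cv (fun m => sum_f_R0 (fun j => F j m) n) (sum_f_R0 l n).
Proof.
  intros H. induction n.
  - simpl. apply H.
  - cbn [sum_f_R0]. apply CV_plus; auto.
Qed.

Lemma A_bound p b : 0 < p -> 1 <= b -> Rabs (A p b) <= 2 / p.
Proof.
  intros Hp Hb. apply (cv_le_abs _ _ _ (A_lim p b Hb)).
  intros m. assert (H1 := em_pos m).
  eapply Rle_trans. apply abs_RInt_le. lra. apply kE_int; lra.
  eapply Rle_trans. apply RInt_le with (g := fun s => 2 * exp (- (p * s))). lra.
  apply (@ex_RInt_continuous R_CompleteNormedModule). intros z [Hz _].
  assert (0 < z) by (apply (Rmin_posz (em m) b (proj1 H1)); lra).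
  apply ptc. apply continuity_pt_comp with (f2 := Rabs). apply cpt.
  apply (continuous_mult kf (fun s => exp (- (p * s)))). apply kf_cont; lra. apply E_cont.
  apply Rcontinuity_abs.
  apply ex_RInt_scalR, Eint_ex.
  intros x Hx. unfold kE. rewrite Rabs_mult, (Rabs_right (exp _)) by (left; apply exp_pos).
  apply Rmult_le_compat_r. left; apply exp_pos. apply kf_bound; lra.
  rewrite RInt_scalR by apply Eint_ex. rewrite Eint by lra.
  assert (exp (- (p * em m)) <= 1). { rewrite <- exp_0. left. apply exp_increasing.
    assert (0 < p * em m) by (apply Rmult_lt_0_compat; lra). lra. }
  assert (0 < exp (- (p * b))) by apply exp_pos.
  apply (Rmult_le_reg_r p). lra. unfold Rdiv. field_simplify; lra.
Qed.

Lemma ex_RInt_sumR (F : nat -> R -> R) a b n :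
  (forall j, ex_RInt (F j) a b) -> ex_RInt (fun s => sum_f_R0 (fun j => F j s) n) a b.
Proof.
  intros H. induction n. simpl. apply (ex_RInt_ext (F 0%nat)). intros; reflexivity. apply H.
  cbn [sum_f_R0]. apply (ex_RInt_plusR (fun s => sum_f_R0 (fun j => F j s) n) (F (S n))); auto.
Qed.

Lemma diff_int t n e b : 0 < t -> 0 < e <= b ->
  RInt (kE t) e b - RInt (kE (t + 4 * INR (S n))) e b =
  4 * sum_f_R0 (fun j => (exp (- ((t + 2 + 4 * INR j) * e)) - exp (- ((t + 2 + 4 * INR j) * b)))
                          / (t + 2 + 4 * INR j)) n
  - (RInt fw (t * e) ((t + 4 * INR (S n)) * e) - RInt fw (t * b) ((t + 4 * INR (S n)) * b)).
Proof.
  intros Ht He.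
  set (q := t + 4 * INR (S n)).
  assert (Hq : 0 < q) by (unfold q; assert (0 <= INR (S n)) by apply pos_INR; lra).
  rewrite <- RInt_minusR by (apply kE_int; lra).
  rewrite (RInt_ext _ (fun s => 4 * sum_f_R0 (fun j => exp (- ((t + 2 + 4 * INR j) * s))) n
                         - (exp (- (t * s)) - exp (- (q * s))) / s)).
  2: { intros x Hx. assert (0 < x) by (destruct Hx as [Hx _]; eapply Rmin_posz; [exact (proj1 He)| |left; exact Hx]; lra).
       unfold kE, q. rewrite <- geom_identity by lra. toR. ring. }
  assert (Hex : forall j, ex_RInt (fun s => exp (- ((t + 2 + 4 * INR j) * s))) e b)
    by (intros; apply Eint_ex).
  rewrite RInt_minusR.
  - rewrite RInt_scalR by (apply ex_RInt_sumR; auto).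
    rewrite (RInt_sumR (fun j s => exp (- ((t + 2 + 4 * INR j) * s)))) by auto.
    rewrite Frullani_fin by lra.
    f_equal. f_equal. apply sum_eq. intros j _. apply Eint. 
    assert (0 <= INR j) by apply pos_INR. lra. lra.
  - apply ex_RInt_scalR, ex_RInt_sumR; auto.
  - apply (ex_RInt_ext (fun s => exp (- (t * s)) / s - exp (- (q * s)) / s)).
    intros; toR; unfold Rdiv; ring.
    apply ex_RInt_minusR; apply Es_int; lra.
Qed.

Lemma cv_ext (u v : nat -> R) l : (forall n, u n = v n) -> Un_cv u l -> Un_cv v l.
Proof. intros E H eps He. destruct (H eps He) as [N HN]. exists N. intros. rewrite <- E. auto. Qed.

Lemma cv_em_fun (f : R -> R) : continuity_pt f 0 -> Un_cv (fun m => f (em m)) (f 0).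
Proof. intros H. apply continuity_seq; auto. apply em_cv. Qed.

Lemma fr_cv p q : 0 < p < q -> Un_cv (fun m => RInt fw (p * em m) (q * em m)) (ln q - ln p).
Proof.
  intros Hpq.
  apply (cv_squeeze (fun m => exp (- (q * em m)) * (ln q - ln p)) _ (fun _ => ln q - ln p)).
  - assert (C := cv_em_fun (fun e => exp (- (q * e)) * (ln q - ln p))).
    cbv beta in C. rewrite Rmult_0_r, Ropp_0, exp_0, Rmult_1_l in C. apply C.
    apply cpt. apply (continuous_mult (fun e => exp (- (q * e))) (fun _ => ln q - ln p)).
    apply E_cont. apply continuous_const.
  - apply cv_const.
  - intros m. apply fw_small. lra. apply em_pos.
Qed.

Lemma A_diff t n b : 0 < t -> 1 <= b ->
  A t b - A (t + 4 * INR (S n)) b =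
  4 * sum_f_R0 (fun j => (1 - exp (- ((t + 2 + 4 * INR j) * b))) / (t + 2 + 4 * INR j)) n
  - ((ln (t + 4 * INR (S n)) - ln t) - RInt fw (t * b) ((t + 4 * INR (S n)) * b)).
Proof.
  intros Ht Hb.
  set (q := t + 4 * INR (S n)).
  assert (Hq : t < q) by (unfold q; assert (0 < INR (S n)) by (apply lt_0_INR; lia); lra).
  eapply UL_sequence. apply (CV_minus _ _ _ _ (A_lim t b Hb) (A_lim q b Hb)).
  eapply cv_ext. { intro m. symmetry. apply diff_int. lra. assert (H1 := em_pos m). lra. }
  apply CV_minus. apply cv_scal. apply cv_sum.
  - intro j. assert (0 <= INR j) by apply pos_INR.
    assert (C := cv_em_fun (fun e => (exp (- ((t + 2 + 4 * INR j) * e)) - exp (- ((t + 2 + 4 * INR j) * b)))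
                          / (t + 2 + 4 * INR j))).
    cbv beta in C. rewrite Rmult_0_r, Ropp_0, exp_0 in C. apply C.
    apply cpt. apply (@ex_derive_continuous R_AbsRing R_NormedModule). auto_derive. lra.
  - apply CV_minus. apply fr_cv. lra. apply cv_const.
Qed.


Definition Sn (t : R) (n : nat) : R :=
  4 * sum_f_R0 (fun j => 1 / (t + 2 + 4 * INR j)) n - (ln (t + 4 * INR (S n)) - ln t).

Lemma Sn_eq t n : 0 < t ->
  Sn t n = (ln (t / 4) - digamma_seq (t / 4 + 1 / 2) n) - (ln (t / 4 + INR n + 1) - ln (INR n)).
Proof.
  intros Ht. unfold Sn, digamma_seq.
  assert (E1 : 4 * sum_f_R0 (fun j => 1 / (t + 2 + 4 * INR j)) n =
               sum_f_R0 (fun k => / (t / 4 + 1 / 2 + INR k)) n).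
  { rewrite scal_sum. apply sum_eq. intros j _. assert (0 <= INR j) by apply pos_INR. field. lra. }
  assert (E2 : ln (t + 4 * INR (S n)) = ln 4 + ln (t / 4 + INR n + 1)).
  { rewrite <- ln_mult. f_equal. rewrite S_INR. field. lra.
    assert (0 <= INR n) by apply pos_INR. lra. }
  assert (E3 : ln t = ln 4 + ln (t / 4)).
  { rewrite <- ln_mult by lra. f_equal. field. }
  rewrite E1, E2, E3. ring.
Qed.

Lemma Sn_cv t : 0 < t -> Un_cv (Sn t) (ln (t / 4) - digamma (t / 4 + 1 / 2)).
Proof.
  intros Ht. apply (cv_ext (fun n => (ln (t / 4) - digamma_seq (t / 4 + 1 / 2) n) - (ln (t / 4 + INR n + 1) - ln (INR n)))).
  { intros n. symmetry. apply Sn_eq. auto. }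
  replace (ln (t / 4) - digamma (t / 4 + 1 / 2)) with ((ln (t / 4) - digamma (t / 4 + 1 / 2)) - 0) by ring.
  apply CV_minus. apply CV_minus. apply cv_const. apply digamma_spec. lra.
  apply (cv_bound _ _ (t / 4 + 1)). lra.
  intros n Hn. rewrite Rminus_0_r.
  assert (H1 : 1 <= INR n) by (apply (le_INR 1); auto).
  assert (E : ln (t / 4 + INR n + 1) - ln (INR n) = ln ((t / 4 + INR n + 1) / INR n)).
  { unfold Rdiv at 2. rewrite ln_mult, ln_Rinv; try lra. apply Rinv_0_lt_compat; lra. }
  rewrite E.
  assert (P : 0 < (t / 4 + INR n + 1) / INR n) by (apply Rdiv_lt_0_compat; lra).
  assert (L1 := ln_le_m1 _ P).
  assert (L2 : 0 <= ln ((t / 4 + INR n + 1) / INR n)).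
  { rewrite <- ln_1. left. apply ln_increasing. lra.
    apply (Rmult_lt_reg_r (INR n)). lra. unfold Rdiv. rewrite Rmult_assoc, Rinv_l; lra. }
  assert (E4 : (t / 4 + INR n + 1) / INR n - 1 = (t / 4 + 1) / INR n) by (field; lra).
  rewrite Rabs_right; lra.
Qed.

Lemma sum_exp_bound t b n : 0 < t -> 0 < b ->
  0 <= sum_f_R0 (fun j => exp (- ((t + 2 + 4 * INR j) * b)) / (t + 2 + 4 * INR j)) n
    <= INR (S n) * (exp (- (t * b)) / t).
Proof.
  intros Ht Hb.
  assert (T : forall j, 0 <= exp (- ((t + 2 + 4 * INR j) * b)) / (t + 2 + 4 * INR j) <= exp (- (t * b)) / t).
  { intro j. assert (0 <= INR j) by apply pos_INR. split.
    apply Rlt_le, Rdiv_lt_0_compat. apply exp_pos. lra.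
    unfold Rdiv. apply Rmult_le_compat. left; apply exp_pos. left; apply Rinv_0_lt_compat; lra.
    left. apply exp_increasing. assert (0 < (2 + 4 * INR j) * b) by (apply Rmult_lt_0_compat; lra). nra.
    apply Rinv_le_contravar; lra. }
  induction n.
  - simpl. rewrite Rmult_1_l. apply (T 0%nat).
  - rewrite tech5. rewrite (S_INR (S n)), (Rmult_plus_distr_r (INR (S n)) 1). specialize (T (S n)). lra.
Qed.

Lemma diff_bound t n b : 0 < t -> 1 <= b ->
  Rabs (A t b - A (t + 4 * INR (S n)) b - Sn t n) <= 4 * INR (S n) * (exp (- (t * b)) / t).
Proof.
  intros Ht Hb. rewrite A_diff by lra. unfold Sn.
  set (q := t + 4 * INR (S n)).
  assert (HSn : 0 < INR (S n)) by (apply lt_0_INR; lia).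
  assert (Hq : t < q) by (unfold q; lra).
  assert (E : 4 * sum_f_R0 (fun j => (1 - exp (- ((t + 2 + 4 * INR j) * b))) / (t + 2 + 4 * INR j)) n
     = 4 * sum_f_R0 (fun j => 1 / (t + 2 + 4 * INR j)) n
       - 4 * sum_f_R0 (fun j => exp (- ((t + 2 + 4 * INR j) * b)) / (t + 2 + 4 * INR j)) n).
  { rewrite <- Rmult_minus_distr_l, <- minus_sum. f_equal. apply sum_eq. intros; unfold Rdiv; ring. }
  rewrite E.
  assert (B1 := sum_exp_bound t b n Ht ltac:(lra)).
  assert (B2 := fw_large t q b ltac:(lra) ltac:(lra)).
  replace ((q - t) / t) with (4 * INR (S n) / t) in B2 by (unfold q; field; lra).
  set (X := sum_f_R0 (fun j => exp (- ((t + 2 + 4 * INR j) * b)) / (t + 2 + 4 * INR j)) n) in *.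
  set (Y := RInt fw (t * b) (q * b)) in *.
  assert (E2 : 4 * INR (S n) / t * exp (- (t * b)) = 4 * (INR (S n) * (exp (- (t * b)) / t))) by (field; lra).
  apply Rabs_le. lra.
Qed.

Lemma exp_decay t b : 0 < t -> 0 < b -> exp (- (t * b)) <= / (1 + t * b).
Proof.
  intros Ht Hb. rewrite exp_Ropp. apply Rinv_le_contravar.
  assert (0 < t * b) by (apply Rmult_lt_0_compat; lra). lra. apply exp_ineq1_le.
Qed.

Lemma main_lim t : 0 < t -> forall eps, 0 < eps -> exists B, 1 <= B /\
  forall b, B <= b -> Rabs (A t b - (ln (t / 4) - digamma (t / 4 + 1 / 2))) < eps.
Proof.
  intros Ht eps Heps.
  set (SS := ln (t / 4) - digamma (t / 4 + 1 / 2)).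
  destruct (Sn_cv t Ht (eps / 3) ltac:(lra)) as [N1 HN1].
  destruct (INR_unbounded (3 / (2 * eps))) as [N2 HN2].
  set (n := (N1 + N2)%nat).
  assert (HS : Rabs (Sn t n - SS) < eps / 3) by (apply HN1; unfold n; lia).
  assert (Hn : 3 / (2 * eps) < INR (S n)) by (assert (INR N2 <= INR (S n)) by (apply le_INR; unfold n; lia); lra).
  assert (HSn : 0 < INR (S n)) by (apply lt_0_INR; lia).
  set (q := t + 4 * INR (S n)).
  assert (Hq : 2 / q < eps / 3).
  { unfold q. apply (Rmult_lt_reg_r (t + 4 * INR (S n))). lra.
    replace (2 / (t + 4 * INR (S n)) * (t + 4 * INR (S n))) with 2 by (field; lra).
    assert (3 / (2 * eps) * (2 * eps) = 3) by (field; lra).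
    assert (3 / (2 * eps) * (2 * eps) < INR (S n) * (2 * eps)) by (apply Rmult_lt_compat_r; lra).
    nra. }
  set (K := 12 * INR (S n) / (eps * t * t)).
  assert (HK : 0 < K). { unfold K. apply Rdiv_lt_0_compat. lra.
    apply Rmult_lt_0_compat; [apply Rmult_lt_0_compat|]; lra. }
  exists (1 + K). split. lra.
  intros b Hb.
  assert (D := diff_bound t n b Ht ltac:(lra)). fold q in D.
  assert (AB := A_bound q b ltac:(unfold q; lra) ltac:(lra)).
  assert (Ex : 4 * INR (S n) * (exp (- (t * b)) / t) < eps / 3).
  { assert (ED := exp_decay t b Ht ltac:(lra)).
    assert (0 < t * b) by (apply Rmult_lt_0_compat; lra).
    assert (/ (1 + t * b) < eps * t / (12 * INR (S n))).
    { assert (P : 0 < eps * t / (12 * INR (S n))) by (apply Rdiv_lt_0_compat; [apply Rmult_lt_0_compat|]; lra).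
      rewrite <- (Rinv_inv (eps * t / (12 * INR (S n)))). apply Rinv_lt_contravar.
      apply Rmult_lt_0_compat; try lra; apply Rinv_0_lt_compat; exact P.
      replace (/ (eps * t / (12 * INR (S n)))) with (K * t) by (unfold K; field; lra).
      nra. }
    apply (Rmult_lt_reg_r (t / (4 * INR (S n)))). apply Rdiv_lt_0_compat; lra.
    replace (4 * INR (S n) * (exp (- (t * b)) / t) * (t / (4 * INR (S n)))) with (exp (- (t * b))) by (field; lra).
    replace (eps / 3 * (t / (4 * INR (S n)))) with (eps * t / (12 * INR (S n))) by (field; lra).
    lra. }
  replace (A t b - SS) with ((A t b - A q b - Sn t n) + A q b + (Sn t n - SS)) by ring.
  eapply Rle_lt_trans. apply Rabs_triang. eapply Rle_lt_trans. apply Rplus_le_compat_r. apply Rabs_triang.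
  lra.
Qed.


Lemma h_bound b : 1 <= b -> Rabs (logphiT b) <= 1 + b.
Proof.
  intros Hb. unfold logphiT, phiT. destruct (Req_EM_T b 0) as [e|_]; [lra|].
  assert (HX := exp_ineq1_le b).
  assert (Hx0 : 0 < exp b) by apply exp_pos.
  set (X := exp b) in *.
  assert (ET : tanh b = (X * X - 1) / (X * X + 1)).
  { unfold tanh, sinh, cosh. rewrite exp_Ropp. fold X. field. split; nra. }
  set (T := tanh b) in *.
  assert (HT : 1 / 2 <= T <= 1).
  { rewrite ET.
    assert (E1 : (X*X-1)/(X*X+1) - 1/2 = (X*X-3) / (2*(X*X+1))) by (field; nra).
    assert (E2 : 1 - (X*X-1)/(X*X+1) = 2 / (X*X+1)) by (field; nra).
    assert (0 <= (X*X-3) / (2*(X*X+1))) by (apply Rmult_le_pos; [nra | left; apply Rinv_0_lt_compat; nra]).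
    assert (0 <= 2 / (X*X+1)) by (apply Rmult_le_pos; [nra | left; apply Rinv_0_lt_compat; nra]).
    lra. }
  unfold Rdiv. rewrite ln_mult, ln_Rinv by (try apply Rinv_0_lt_compat; lra).
  assert (L1 := ln_le_m1 T ltac:(lra)).
  assert (L2 := ln_le_m1 (/ T) ltac:(apply Rinv_0_lt_compat; lra)).
  rewrite ln_Rinv in L2 by lra.
  assert (/ T <= 2). { replace 2 with (/ (1/2)) by field. apply Rinv_le_contravar; lra. }
  assert (L3 := ln_le_m1 b ltac:(lra)).
  assert (L4 := ln_le_m1 (/ b) ltac:(apply Rinv_0_lt_compat; lra)).
  rewrite ln_Rinv in L4 by lra.
  assert (/ b <= 1). { rewrite <- Rinv_1. apply Rinv_le_contravar; lra. }
  apply Rabs_le. lra.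
Qed.

Lemma hE_bound t b : 0 < t -> 1 <= b ->
  Rabs (logphiT b * exp (- (t * b))) <= 8 / (t * t * b).
Proof.
  intros Ht Hb. rewrite Rabs_mult, (Rabs_right (exp _)) by (left; apply exp_pos).
  assert (Htb : 0 < t * b) by (apply Rmult_lt_0_compat; lra).
  assert (Ee : exp (- (t * b)) <= 4 / (t * b * (t * b))).
  { rewrite exp_Ropp.
    replace (exp (t * b)) with (exp (t * b / 2) * exp (t * b / 2)) by (rewrite <- exp_plus; f_equal; field).
    assert (H1 := exp_ineq1_le (t * b / 2)).
    replace (4 / (t * b * (t * b))) with (/ ((t * b / 2) * (t * b / 2))) by (field; lra).
    apply Rinv_le_contravar. nra. apply Rmult_le_compat; lra. }
  assert (Hh := h_bound b Hb).
  assert (0 <= Rabs (logphiT b)) by apply Rabs_pos.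
  eapply Rle_trans. apply Rmult_le_compat; [lra| left; apply exp_pos | exact Hh | exact Ee].
  replace (8 / (t * t * b)) with (2 * b * (4 / (t * b * (t * b)))) by (field; lra).
  apply Rmult_le_compat_r. apply Rlt_le, Rdiv_lt_0_compat; nra. lra.
Qed.

Lemma free_main t : 0 < t ->
  free_V_im logphiT t (t * (ln (t / 4) - digamma (t / 4 + 1 / 2))).
Proof.
  intros Ht. set (SS := ln (t / 4) - digamma (t / 4 + 1 / 2)).
  exists (SS / t). split; [split|].
  - intros b Hb. constructor. apply ex_RInt_Reals_0. apply g_int; lra.
  - intros eps Heps.
    destruct (main_lim t Ht (eps * t / 2) ltac:(nra)) as [B [HB1 HB]].
    exists (Rmax B (16 / (t * t * t * eps) + 1)). intros b pr Hb.
    rewrite <- RInt_Reals. change (RInt (gp t) 0 b) with (RInt (fun s => logphiT s * exp (- (t * s))) 0 b).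
    assert (Hb1 : B <= b) by (eapply Rle_trans; [apply Rmax_l|exact Hb]).
    assert (Hb2 : 16 / (t * t * t * eps) + 1 <= b) by (eapply Rle_trans; [apply Rmax_r|exact Hb]).
    assert (H16 : 0 < 16 / (t * t * t * eps)) by (apply Rdiv_lt_0_compat; [lra|];
       repeat apply Rmult_lt_0_compat; lra).
    specialize (HB b Hb1).
    assert (HE := hE_bound t b Ht ltac:(lra)).
    assert (HE2 : 8 / (t * t * b) < eps * t / 2).
    { apply (Rmult_lt_reg_r (t * t * b)). repeat apply Rmult_lt_0_compat; lra.
      replace (8 / (t * t * b) * (t * t * b)) with 8 by (field; lra).
      assert (16 / (t * t * t * eps) * (t * t * t * eps) = 16) by (field; lra).
      assert (0 < t * t * t * eps) by (repeat apply Rmult_lt_0_compat; lra).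
      assert (16 / (t * t * t * eps) * (t * t * t * eps) < b * (t * t * t * eps)).
      { apply Rmult_lt_compat_r; lra. }
      replace (eps * t / 2 * (t * t * b)) with (b * (t * t * t * eps) / 2) by field. lra. }
    unfold A in HB. fold SS in HB. fold (gp t).
    set (I := RInt (gp t) 0 b) in *.
    set (hE := logphiT b * exp (- (t * b))) in *.
    replace (I - SS / t) with (((t * I + hE - SS) - hE) / t) by (field; lra).
    unfold Rdiv. rewrite Rabs_mult, (Rabs_right (/ t)) by (left; apply Rinv_0_lt_compat; lra).
    apply (Rmult_lt_reg_r t). lra. rewrite Rmult_assoc, Rinv_l, Rmult_1_r by lra.
    eapply Rle_lt_trans. apply Rabs_triang. rewrite Rabs_Ropp. lra.
  - field. lra.
Qed.

Theorem corollary4 :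
  (forall t : R, 0 < t ->
     free_V_im logphiT t (t * (ln (t / 2) - beta_fun (t / 2) - digamma (t / 2)))
  /\ free_V_im logphiT t (t * (ln (t / 4) - digamma (t / 4 + 1 / 2)))) /\
  (forall s : R, 0 < s ->
     2 * digamma (2 * s) - digamma s - digamma (s + 1 / 2) = 2 * ln 2).
Proof.
  split.
  - intros t Ht. rewrite form_eq by exact Ht. split; apply free_main; exact Ht.
  - exact digamma_dup.
Qed.
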